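(* Let $G$ be an admissible graph, let $T$ be the adjacency matrix of its oriented line graph, let $\lambda>0$ be the largest eigenvalue of $T$, and let $\zeta_G(x)=\exp\left(\sum_{k=1}^\infty \frac{\operatorname{tr}(T^k)}{k}x^k\right)$ for $x\in[0,\frac{1}{\lambda})$. Fix $a$ with $0<a<\frac{1}{\lambda}$ and define $s:[0,1]\to\mathbb{R}$ by $$s(p)=p\cdot\frac{\zeta_G(a)+1-\left(\zeta_G(ap)+p\right)}{1+a\zeta_G'(a)}.$$ Then $s$ has a global maximum in $(0,1)$; that is, there exists $c\in(0,1)$ with $s(c)\ge s(p)$ for all $p\in[0,1]$.
   Context: An admissible graph is a simple, finite, connected, undirected graph with no vertex of degree one which is neither a cycle graph nor a path graph. If $G$ has $m$ edges, let $\mathcal{E}=\{e^{(1)},\dots,e^{(2m)}\}$ be the set of its $2m$ oriented edges (each undirected edge $\{u,v\}$ gives the two directed edges $(u,v)$ and $(v,u)$; for $e=(u,v)$ write $i(e)=u$, $t(e)=v$). The oriented line graph $\overline{G}$ has vertex set $\mathcal{E}$ and a directed edge from $e$ to $f$ iff $t(e)=i(f)$ and $i(e)\neq t(f)$. $T$ is the $2m\times 2m$ $0/1$ adjacency matrix of $\overline{G}$. The function $\zeta_G$ is the Ihara zeta function of $G$ restricted to the real interval $[0,1/\lambda)$, where the defining series converges; $\zeta_G'$ is its derivative. *)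

(* Defs.v *)
From HB Require Import structures.
From mathcomp Require Import all_boot all_order all_algebra.
From mathcomp Require Import all_classical all_reals all_analysis.
Set Implicit Arguments. Unset Strict Implicit. Unset Printing Implicit Defensive.
Import Order.TTheory GRing.Theory Num.Theory.
Local Open Scope ring_scope.

Section Graph.
Variables (V : finType) (e : rel V).

Definition simple_graph : Prop := symmetric e /\ irreflexive e.
Definition connected_graph : Prop := forall x y, connect e x y.
Definition degree (x : V) : nat := #|[set y | e x y]|.

Definition path_graph : Prop :=
  exists n (f : 'I_n -> V), bijective f /\
    forall i j : 'I_n, e (f i) (f j) = ((i.+1 == j) || (j.+1 == i))%N.

Definition cycle_graph : Prop :=
  exists n (f : 'I_n -> V), (3 <= n)%N /\ bijective f /\
    forall i j : 'I_n, e (f i) (f j) =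
      ((j == i.+1 %% n :> nat) || (i == j.+1 %% n :> nat))%N.

Definition admissible : Prop :=
  [/\ simple_graph, connected_graph, (forall x, degree x != 1%N),
      ~ cycle_graph & ~ path_graph].

Definition oedge := {x : V * V | e x.1 x.2}.
Definition oinit (d : oedge) : V := (val d).1.
Definition oterm (d : oedge) : V := (val d).2.

Definition Tmat (R : realType) : 'M[R]_#|{: oedge}| :=
  \matrix_(i, j) ((oterm (enum_val i) == oinit (enum_val j)) &&
                  (oinit (enum_val i) != oterm (enum_val j)))%:R.

Definition mxpow (R : realType) n (M : 'M[R]_n) (k : nat) : 'M[R]_n :=
  iter k (fun A => A *m M) 1%:M.

Definition zetaG (R : realType) (x : R) : R :=
  expR (\big[+%R/0%R]_(1 <= k <oo) (\tr (mxpow (Tmat R) k) / k%:R * x ^+ k)).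

End Graph.

Definition s_fun (R : realType) (V : finType) (e : rel V) (a p : R) : R :=
  p * ((zetaG e a + 1 - (zetaG e (a * p) + p)) / (1 + a * derive1 (fun x : R => zetaG e x) a)).

(* Main.v *)
Require Import Defs.
From HB Require Import structures.
From mathcomp Require Import all_boot all_order all_algebra.
From mathcomp Require Import all_classical all_reals all_analysis.
From mathcomp Require Import ring lra.
Import Order.TTheory GRing.Theory Num.Theory numFieldNormedType.Exports.
Local Open Scope classical_set_scope. Local Open Scope ring_scope.

Section AN.
Variables (R : realType) (t : nat -> R) (rho : R).
Hypothesis ht : forall k, 0 <= t k.
Hypothesis hb : forall x, 0 <= x -> x < rho ->
  exists C, forall N, \sum_(k < N) x ^+ k * t k <= C.

Definition u (x : R) (N : nat) := \sum_(1 <= k < N) (t k / k%:R * x ^+ k).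
Definition Lser (x : R) := limn (u x).

Lemma term_ge0 x k : 0 <= x -> 0 <= t k / k%:R * x ^+ k.
Proof. by move=> hx; apply: mulr_ge0; [apply: divr_ge0 | apply: exprn_ge0]. Qed.

Lemma u_nd x : 0 <= x -> {homo u x : n m / (n <= m)%N >-> n <= m}.
Proof.
move=> hx; apply/nondecreasing_seqP => N.
case: N => [|N]; first by rewrite /u !big_geq.
rewrite /u [X in _ <= X]big_nat_recr //= lerDl; exact: term_ge0.
Qed.

Lemma u_bnd x N : 0 <= x -> u x N <= \sum_(k < N) x ^+ k * t k.
Proof.
move=> hx; rewrite /u -(big_mkord xpredT (fun k => x ^+ k * t k)).
case: N => [|N]; first by rewrite !big_geq.
rewrite [X in _ <= X](big_ltn) // -[X in X <= _]add0r.
apply: lerD; first by rewrite expr0 mul1r.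
apply: ler_sum_nat => k /andP[hk _].
rewrite [X in _ <= X]mulrC; apply: ler_wpM2r; first exact: exprn_ge0.
rewrite ler_pdivrMr; last by rewrite ltr0n.
by rewrite ler_peMr // ler1n.
Qed.

Lemma u_ub x : 0 <= x -> x < rho -> has_ubound (range (u x)).
Proof.
move=> hx hxr; have [C hC] := hb x hx hxr.
by exists C => _ [N _ <-]; apply: le_trans (@u_bnd x N hx) (hC N).
Qed.

Lemma Lser_sup x : 0 <= x -> x < rho -> Lser x = sup (range (u x)).
Proof.
move=> hx hxr; apply: cvg_lim => //.
by apply: nondecreasing_cvgn; [exact: u_nd | exact: u_ub].
Qed.

Lemma u_le_Lser x N : 0 <= x -> x < rho -> u x N <= Lser x.
Proof.
move=> hx hxr; rewrite Lser_sup //.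
apply: sup_upper_bound; last by exists N.
split; [by exists (u x 0), 0%N | exact: u_ub].
Qed.

Lemma Lser_le x B : 0 <= x -> x < rho -> (forall N, u x N <= B) -> Lser x <= B.
Proof.
move=> hx hxr hB; rewrite Lser_sup //.
apply: ge_sup; first by exists (u x 0), 0%N.
by move=> _ [N _ <-].
Qed.

Lemma Lser_mono x y : 0 <= x -> x <= y -> y < rho -> Lser x <= Lser y.
Proof.
move=> hx hxy hy.
have hy0 : 0 <= y by apply: le_trans hxy.
apply: Lser_le => //; first exact: le_lt_trans hy.
move=> N; apply: le_trans (@u_le_Lser y N hy0 hy).
apply: ler_sum_nat => k _; apply: ler_wpM2l.
  by apply: divr_ge0.
by apply: lerXn2r.
Qed.

Lemma Lser0 : Lser 0 = 0.
Proof.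
rewrite /Lser.
have -> : u 0 = fun _ => 0.
  apply: funext => N; rewrite /u; apply: big1_seq => k.
  rewrite mem_index_iota => /andP[_ /andP[hk _]].
  rewrite expr0n; case: k hk => [|k]; first by [].
  by move=> _; rewrite mulr0.
exact: lim_cst.
Qed.

Lemma powdiff (x y a : R) k : 0 <= x -> x <= y -> y <= a ->
  y ^+ k - x ^+ k <= k%:R * a ^+ k.-1 * (y - x).
Proof.
move=> hx hxy hya.
rewrite subrXX mulrC ler_wpM2r //; first lra.
apply: le_trans (_ : \sum_(i < k) a ^+ k.-1 <= _); last first.
  by rewrite sumr_const card_ord mulr_natl.
apply: ler_sum => i _.
have hy : 0 <= y by lra.
have hik : (i <= k.-1)%N by case: i => i /= hi; rewrite -ltnS; case: k hi => //.
have -> : a ^+ k.-1 = a ^+ (k.-1 - i) * a ^+ i by rewrite -exprD subnK.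
apply: ler_pM; try apply: exprn_ge0 => //; apply: lerXn2r => //; rewrite ?nnegrE; lra.
Qed.

Lemma Lser_lip a : 0 < a -> a < rho ->
  exists K, 0 <= K /\ forall x y, 0 <= x -> x <= y -> y <= a -> Lser y <= Lser x + K * (y - x).
Proof.
move=> ha har.
have [C hC] := hb a (ltW ha) har.
have C0 : 0 <= C by apply: le_trans (hC 0%N); rewrite big_ord0.
exists (C / a); split; first by apply: divr_ge0 => //; exact: ltW.
move=> x y hx hxy hya.
have hyr : y < rho by lra.
apply: Lser_le => //; first lra.
move=> N.
have h1 : u y N - u x N <= (y - x) / a * \sum_(k < N) a ^+ k * t k.
  rewrite /u -sumrB -(big_mkord xpredT (fun k => a ^+ k * t k)).
  case: N => [|N]; first by rewrite !big_geq // mulr0.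
  rewrite [X in _ <= _ * X](big_ltn) // mulrDr.
  rewrite -[X in X <= _]add0r; apply: lerD.
    by apply: mulr_ge0; [apply: divr_ge0; lra | rewrite expr0 mul1r].
  rewrite mulr_sumr; apply: ler_sum_nat => k /andP[hk _].
  rewrite -mulrBr.
  apply: le_trans (_ : t k / k%:R * (k%:R * a ^+ k.-1 * (y - x)) <= _).
    apply: ler_wpM2l; first by apply: divr_ge0.
    exact: powdiff.
  have hk0 : (k%:R : R) != 0 by rewrite pnatr_eq0 -lt0n.
  have -> : a ^+ k = a * a ^+ k.-1 by rewrite -exprS prednK.
  have ha0 : a != 0 by lra.
  rewrite le_eqVlt; apply/orP; left; apply/eqP.
  by field; apply/andP; split.
have h2 : u x N <= Lser x by apply: u_le_Lser => //; lra.
have h3 : (y - x) / a * \sum_(k < N) a ^+ k * t k <= C / a * (y - x).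
  apply: le_trans (_ : (y - x) / a * C <= _).
    apply: ler_wpM2l; [apply: divr_ge0; lra | exact: hC].
  rewrite le_eqVlt; apply/orP; left; apply/eqP; field; lra.
lra.
Qed.

End AN.
Arguments Lser {R}.
Arguments u {R}.
Arguments Lser_mono {R t rho}.
Arguments Lser_lip {R t rho}.

Set Implicit Arguments. Unset Strict Implicit. Unset Printing Implicit Defensive.

Section MX.
Variables (R : realType) (n : nat).
Implicit Types (A B M W : 'M[R]_n).

Definition nonneg (M : 'M[R]_n) := forall i j, 0 <= M i j.
Definition nrm (M : 'M[R]_n) : R := \sum_i \sum_j `|M i j|.
Definition psum A N := \sum_(k < N) mxpow A k.

Lemma mxpowS A k : mxpow A k.+1 = mxpow A k *m A.
Proof. by []. Qed.

Lemma psum_id A N : psum A N *m (1%:M - A) = 1%:M - mxpow A N.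
Proof.
elim: N => [|N IH]; first by rewrite /psum big_ord0 mul0mx /= subrr.
rewrite /psum big_ord_recr /= mulmxDl -/(psum A N) IH mulmxBr mulmx1.
rewrite addrA. by rewrite addrNK.
Qed.

Lemma nrm_ge0 M : 0 <= nrm M.
Proof. by apply: sumr_ge0 => i _; apply: sumr_ge0 => j _. Qed.

Lemma entry_le_nrm M i j : `|M i j| <= nrm M.
Proof.
rewrite /nrm (bigD1 i) //= (bigD1 j) //= -addrA lerDl.
apply: addr_ge0; first by apply: sumr_ge0.
by apply: sumr_ge0 => k _; apply: sumr_ge0.
Qed.

Lemma nrm_mul A B : nrm (A *m B) <= nrm A * nrm B.
Proof.
rewrite /nrm.
have -> : (\sum_i \sum_j `|A i j|) * (\sum_i \sum_j `|B i j|) =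
   \sum_i \sum_k \sum_l \sum_j `|A i k| * `|B l j|.
  rewrite mulr_suml; apply: eq_bigr => i _; rewrite mulr_suml.
  apply: eq_bigr => k _; rewrite mulr_sumr; apply: eq_bigr => l _.
  by rewrite mulr_sumr.
apply: ler_sum => i _.
apply: (@le_trans _ _ (\sum_k \sum_j `|A i k| * `|B k j|)).
  rewrite exchange_big /=; apply: ler_sum => j _; rewrite !mxE.
  apply: le_trans (ler_norm_sum _ _ _) _.
  by apply: ler_sum => k _; rewrite normrM.
apply: ler_sum => k _.
rewrite [X in _ <= X](bigD1 k) //= lerDl.
by apply: sumr_ge0 => m _; apply: sumr_ge0 => m' _; apply: mulr_ge0.
Qed.

Lemma nrmD A B : nrm (A + B) <= nrm A + nrm B.
Proof.
rewrite /nrm -big_split /=; apply: ler_sum => i _; rewrite -big_split /=.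
by apply: ler_sum => j _; rewrite mxE ler_normD.
Qed.

Lemma nrmZ c A : nrm (c *: A) = `|c| * nrm A.
Proof.
rewrite /nrm mulr_sumr; apply: eq_bigr => i _; rewrite mulr_sumr.
by apply: eq_bigr => j _; rewrite mxE normrM.
Qed.

Lemma nonneg1 : nonneg 1%:M.
Proof. by move=> i j; rewrite mxE; case: (i == j). Qed.

Lemma nonneg_mul A B : nonneg A -> nonneg B -> nonneg (A *m B).
Proof. by move=> hA hB i j; rewrite mxE; apply: sumr_ge0 => k _; apply: mulr_ge0. Qed.

Lemma nonneg_add A B : nonneg A -> nonneg B -> nonneg (A + B).
Proof. by move=> hA hB i j; rewrite mxE; apply: addr_ge0. Qed.

Lemma nonneg_scale c A : 0 <= c -> nonneg A -> nonneg (c *: A).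
Proof. by move=> hc hA i j; rewrite mxE; apply: mulr_ge0. Qed.

Lemma nonneg_mxpow A k : nonneg A -> nonneg (mxpow A k).
Proof. by move=> hA; elim: k => [|k IH]; [exact: nonneg1 | exact: nonneg_mul]. Qed.

Lemma nonneg_psum A N : nonneg A -> nonneg (psum A N).
Proof.
move=> hA i j; rewrite /psum summxE; apply: sumr_ge0 => k _.
exact: nonneg_mxpow.
Qed.

Lemma nrm_powmul B k V : nrm (mxpow B k *m V) <= nrm B ^+ k * nrm V.
Proof.
elim: k V => [|k IH] V; first by rewrite /= mul1mx expr0 mul1r.
rewrite mxpowS -mulmxA; apply: le_trans (IH _) _.
rewrite exprSr -mulrA ler_wpM2l //; first by apply: exprn_ge0; exact: nrm_ge0.
exact: nrm_mul.
Qed.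

Lemma inv_uniq A P : A \in unitmx -> P *m A = 1%:M -> invmx A = P.
Proof. by move=> uA h; rewrite -[P]mulmx1 -(mulmxV uA) mulmxA h mul1mx. Qed.

Lemma geo_ge0 (v c : R) : 0 <= c -> (forall N : nat, - ((2^-1) ^+ N * c) <= v) -> 0 <= v.
Proof.
move=> hc h; rewrite leNgt; apply/negP => hv.
have hv' : 0 < - v by rewrite oppr_gt0.
set N := Num.Def.archi_bound (c / - v).
have hN : c / - v < N%:R by apply: archi_boundP; apply: divr_ge0 => //; exact: ltW.
have h2 : (N%:R : R) <= 2 ^+ N.
  have : (N <= 2 ^ N)%N by apply: ltnW; apply: ltn_expl.
  by rewrite -(ler_nat R) natrX.
have := h N; rewrite lerNl => h3.
have h4 : c < - v * 2 ^+ N.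
  have h6 : c / - v < 2 ^+ N by exact: lt_le_trans hN h2.
  by rewrite ltr_pdivrMr // mulrC in h6.
have h5 : (2^-1) ^+ N * c < - v.
  rewrite exprVn ltr_pdivrMl; last by apply: exprn_gt0.
  by rewrite mulrC.
by move: (le_lt_trans h3 h5); rewrite ltxx.
Qed.

Lemma neumann B : nonneg B -> nrm B <= 2^-1 -> (1%:M - B) \in unitmx ->
  nonneg (invmx (1%:M - B)).
Proof.
move=> hB hn hu i j.
set V := invmx (1%:M - B).
have hid : forall N, psum B N = V - mxpow B N *m V.
  move=> N; have := psum_id B N => /(congr1 (mulmx^~ V)).
  by rewrite (mulmxK hu) mulmxBl mul1mx.
apply: (@geo_ge0 _ (nrm V)); first exact: nrm_ge0.
move=> N.
have e : V i j = psum B N i j + (mxpow B N *m V) i j.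
  by rewrite hid !mxE addrNK.
rewrite e.
have h1 : 0 <= psum B N i j by apply: nonneg_psum.
have h2 : - ((2^-1) ^+ N * nrm V) <= (mxpow B N *m V) i j.
  apply: lerNnormlW.
  apply: le_trans (entry_le_nrm _ _ _) _; apply: le_trans (nrm_powmul _ _ _) _.
  apply: ler_wpM2r; first exact: nrm_ge0.
  by apply: lerXn2r => //; rewrite ?nnegrE ?nrm_ge0 //; apply: le_trans hn; apply: nrm_ge0.
lra.
Qed.

Definition Wm (T : 'M[R]_n) (x : R) := invmx (1%:M - x *: T).

Lemma step T x y : nonneg T -> 0 <= x -> x <= y ->
  (1%:M - y *: T) \in unitmx -> (1%:M - x *: T) \in unitmx ->
  nonneg (Wm T x) -> (y - x) * nrm (Wm T x) * nrm T <= 2^-1 ->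
  nonneg (Wm T y).
Proof.
move=> hT hx hxy huy hux hW hb.
set W := Wm T x.
set B := (y - x) *: (W *m T).
have hid : (1%:M - x *: T) *m (1%:M - B) = 1%:M - y *: T.
  rewrite mulmxBr mulmx1 /B -scalemxAr mulmxA /W /Wm (mulmxV hux) mul1mx.
  by rewrite scalerBl opprB addrA subrK.
have hB : nonneg B by apply: nonneg_scale; [lra | exact: nonneg_mul].
have hnB : nrm B <= 2^-1.
  rewrite /B nrmZ; apply: le_trans hb; rewrite -mulrA ger0_norm; last lra.
  by apply: ler_wpM2l; [lra | exact: nrm_mul].
have huB : (1%:M - B) \in unitmx by move: huy; rewrite -hid unitmx_mul => /andP[].
have -> : Wm T y = invmx (1%:M - B) *m W.
  apply: inv_uniq => //; rewrite -hid mulmxA -(mulmxA _ W) /W /Wm (mulVmx hux).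
  by rewrite mulmx1 (mulVmx huB).
by apply: nonneg_mul; [exact: neumann | exact: hW].
Qed.

Lemma perturb T x r : (1%:M - x *: T) \in unitmx -> (1%:M - r *: T) \in unitmx ->
  `|x - r| * nrm (Wm T r) * nrm T <= 2^-1 ->
  nrm (Wm T x) <= 2 * nrm (Wm T r).
Proof.
move=> hux hur hb.
have hid : Wm T x = Wm T r + (x - r) *: (Wm T r *m T *m Wm T x).
  have : Wm T r *m ((1%:M - r *: T) - (1%:M - x *: T)) *m Wm T x = Wm T x - Wm T r.
    rewrite mulmxBr mulmxBl (mulVmx hur) mul1mx -mulmxA (mulmxV hux) mulmx1.
    done.
  have -> : (1%:M - r *: T) - (1%:M - x *: T) = (x - r) *: T.
    by rewrite opprB addrC addrA subrK scalerBl.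
  move=> H; rewrite -scalemxAr -scalemxAl in H.
  by rewrite H addrC subrK.
have h1 : nrm (Wm T x) <= nrm (Wm T r) + 2^-1 * nrm (Wm T x).
  rewrite {1}hid; apply: le_trans (nrmD _ _) _; rewrite lerD2l nrmZ.
  apply: le_trans (_ : `|x - r| * (nrm (Wm T r) * nrm T * nrm (Wm T x)) <= _).
    apply: ler_wpM2l => //; apply: le_trans (nrm_mul _ _) _.
    by apply: ler_wpM2r; [exact: nrm_ge0 | exact: nrm_mul].
  rewrite !mulrA; apply: ler_wpM2r => //; exact: nrm_ge0.
have := nrm_ge0 (Wm T x); lra.
Qed.

Lemma Wm0 T : Wm T 0 = 1%:M.
Proof. by rewrite /Wm scale0r subr0 invmx1. Qed.

Lemma extend T b : nonneg T -> 0 <= b ->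
  (forall x, 0 <= x -> x <= b -> (1%:M - x *: T) \in unitmx) ->
  nonneg (Wm T b).
Proof.
move=> hT hb hu.
pose A := [set x : R | 0 <= x /\ x <= b /\ nonneg (Wm T x)].
have A0 : A 0 by split => //; split => //; rewrite Wm0; exact: nonneg1.
have hsA : has_sup A.
  split; first by exists 0.
  by exists b => x [_ [hx _]].
set r := sup A.
have r0 : 0 <= r by apply: sup_upper_bound.
have rb : r <= b by apply: ge_sup; [exists 0 | move=> x [_ [hx _]]].
set K := nrm (Wm T r).
set t := nrm T.
have K0 : 0 <= K by exact: nrm_ge0.
have t0 : 0 <= t by exact: nrm_ge0.
set d := (4 * (K * t + 1))^-1.
have Kt0 : 0 <= K * t by exact: mulr_ge0.
have d0 : 0 < d by rewrite invr_gt0; lra.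
have dKt : d * (K * t) <= 4^-1.
  rewrite /d ler_pdivrMl; last lra.
  rewrite mulrAC mulfV ?mul1r; lra.
have [x [x0 [xb xW]] hx] := sup_adherent d0 hsA.
have xr : x <= r by apply: sup_upper_bound => //.
have hnx : nrm (Wm T x) <= 2 * K.
  apply: perturb; [exact: hu | exact: hu | ].
  rewrite ler0_norm; last lra.
  rewrite -/K -/t.
  have hx' : r - d < x := hx.
  have : (r - x) * (K * t) <= d * (K * t) by apply: ler_wpM2r => //; lra.
  rewrite !mulrA; lra.
set y := Num.min b (x + d).
have yb : y <= b by rewrite ge_min lexx.
have xy : x <= y by rewrite le_min xb /=; lra.
have hy : nonneg (Wm T y).
  apply: (@step _ x) => //; [apply: hu => //; lra | exact: hu |].
  have : (y - x) * (nrm (Wm T x) * t) <= d * (2 * K * t).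
    apply: ler_pM; [lra | exact: mulr_ge0 (nrm_ge0 _) t0 | |].
      by rewrite lerBlDl ge_min lexx orbT.
    by apply: ler_wpM2r.
  rewrite -/t !mulrA; lra.
have [bxd|bxd] := lerP b (x + d).
  have eby : y = b by rewrite /y min_l.
  by rewrite -eby.
have yA : A y by split; [lra | split].
have := sup_upper_bound hsA yA.
rewrite -/r /y min_r; last exact: ltW.
have hx2 : r - d < x := hx.
lra.
Qed.
End MX.

Section B.
Variables (R : realType) (n : nat).
Implicit Types (T : 'M[R]_n).

Lemma mxpowZ T x k : mxpow (x *: T) k = x ^+ k *: mxpow T k.
Proof.
elim: k => [|k IH]; first by rewrite expr0 scale1r.
by rewrite mxpowS IH mxpowS -scalemxAl -scalemxAr scalerA exprSr.
Qed.

Lemma tr_psum T x N : \tr (psum (x *: T) N) = \sum_(k < N) x ^+ k * \tr (mxpow T k).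
Proof.
rewrite /psum raddf_sum; apply: eq_bigr => k _.
by rewrite mxpowZ -mxtraceZ.
Qed.

Lemma tr_bound T x N : nonneg T -> 0 <= x -> (1%:M - x *: T) \in unitmx ->
  nonneg (Wm T x) ->
  \sum_(k < N) x ^+ k * \tr (mxpow T k) <= \tr (Wm T x).
Proof.
move=> hT hx hu hW.
rewrite -tr_psum.
have := psum_id (x *: T) N => /(congr1 (mulmx^~ (Wm T x))).
rewrite (mulmxK hu) mulmxBl mul1mx => ->.
rewrite raddfB /= lerBlDr lerDl /mxtrace.
apply: sumr_ge0 => i _; apply: nonneg_mul => //.
by apply: nonneg_mxpow; apply: nonneg_scale.
Qed.

Lemma unit_of_eig T (lam x : R) : 0 <= x -> x * lam < 1 ->
  (forall mu, eigenvalue T mu -> mu <= lam) -> (1%:M - x *: T) \in unitmx.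
Proof.
move=> hx hxl hmax.
have [->|x0] := eqVneq x 0; first by rewrite scale0r subr0 unitmx1.
apply/negPn/negP => hn.
have hx' : 0 < x by rewrite lt_def x0.
have : eigenvalue T x^-1.
  rewrite /eigenvalue /eigenspace kermx_eq0 row_free_unit.
  have -> : T - x^-1%:M = (- x^-1) *: (1%:M - x *: T).
    rewrite scalerBr scalemx1 scalerA mulNr mulVf // scaleN1r opprK addrC.
    by rewrite raddfN.
  by rewrite unitmxZ // unitfE oppr_eq0 invr_eq0.
move/hmax => hl.
have : 1 <= x * lam.
  by rewrite -(mulfV x0) ler_wpM2l //; exact: ltW.
lra.
Qed.

End B.

Lemma deriv_ge0 (R : realType) (Z : R -> R) (a r : R) : 0 < a -> a < r ->
  (forall x y, 0 <= x -> x <= y -> y < r -> Z x <= Z y) ->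
  0 <= derive1 Z a.
Proof.
move=> ha har hZ.
rewrite /derive1.
have [hc|hc] := pselect (cvg ((fun h => h^-1 *: (Z (h + a) - Z a)) @ 0^')).
  apply: limr_ge => //.
  have he : 0 < Num.min a (r - a) by rewrite lt_min ha /=; lra.
  apply: filterS (dnbhs0_lt he) => h.
  rewrite lt_min => /andP[].
  rewrite !ltr_norml => /andP[h1 h1'] /andP[h2 h2'].
  have [h0|h0] := lerP 0 h.
    apply: mulr_ge0; first by rewrite invr_ge0.
    by rewrite subr_ge0; apply: hZ; lra.
  apply: mulr_le0; first by rewrite invr_le0; exact: ltW.
  by rewrite subr_le0; apply: hZ; lra.
rewrite /lim /lim_in getPN //.
move=> l hl; apply: hc; apply/cvg_ex; by exists l.
Qed.

Lemma mono_lip_cont (R : realType) (f : R -> R) M : 0 <= M ->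
  (forall p q, p <= q -> 0 <= f q - f p /\ f q - f p <= M * (q - p)) ->
  continuous f.
Proof.
move=> hM hf p; apply/cvgrPdist_le => e he.
have hd : 0 < e / (M + 1) by apply: divr_gt0; lra.
exists (e / (M + 1)) => //= q hq0.
have hq : `|p - q| < e / (M + 1) := hq0.
have hMd : M * (e / (M + 1)) <= e.
  rewrite mulrA ler_pdivrMr; last lra.
  nra.
have [pq|qp] := lerP p q.
  have [h1 h2] := hf _ _ pq.
  rewrite distrC ger0_norm //.
  move: hq; rewrite distrC ger0_norm; last lra.
  move=> hq.
  have : M * (q - p) <= M * (e / (M + 1)) by apply: ler_wpM2l => //; exact: ltW.
  lra.
have [h1 h2] := hf _ _ (ltW qp).
rewrite ger0_norm //.
move: hq; rewrite ger0_norm; last lra.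
move=> hq.
have : M * (p - q) <= M * (e / (M + 1)) by apply: ler_wpM2l => //; exact: ltW.
lra.
Qed.

Definition cl (R : realType) (p : R) : R := if p < 0 then 0 else if 1 < p then 1 else p.
Arguments cl {R}.

Lemma cl_bnd {R : realType} (p : R) : 0 <= cl p /\ cl p <= 1.
Proof.
rewrite /cl; case: ltrP => h1; first by lra.
case: ltrP => h2; lra.
Qed.

Lemma cl_id {R : realType} (p : R) : 0 <= p -> p <= 1 -> cl p = p.
Proof.
move=> h0 h1; rewrite /cl; case: ltrP => h2; first lra.
case: ltrP => h3 //; lra.
Qed.

Lemma cl_mono {R : realType} (p q : R) : p <= q -> 0 <= cl q - cl p /\ cl q - cl p <= q - p.
Proof.
move=> hpq; rewrite /cl.
case: (ltrP p 0) => h1; case: (ltrP 1 p) => h2; case: (ltrP q 0) => h3;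
  case: (ltrP 1 q) => h4; lra.
Qed.

Theorem theorem1 (R : realType) (V : finType) (e : rel V)
  (hG : admissible e) (lam : R)
  (hlam_pos : 0 < lam)
  (hlam_eig : eigenvalue (Tmat e R) lam)
  (hlam_max : forall mu : R, eigenvalue (Tmat e R) mu -> mu <= lam)
  (a : R) (ha0 : 0 < a) (ha1 : a < lam^-1) :
  exists c : R, 0 < c < 1 /\
    forall p : R, 0 <= p <= 1 -> s_fun e a p <= s_fun e a c.
Proof.
set T := Tmat e R.
set rho := lam^-1.
have hT : nonneg T by move=> i j; rewrite mxE; apply: ler0n.
have hu : forall x, 0 <= x -> x < rho -> (1%:M - x *: T) \in unitmx.
  move=> x hx hxr; apply: (unit_of_eig hx _ hlam_max).
  have lam0 : lam != 0 by rewrite gt_eqF.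
  by rewrite -(mulVf lam0) ltr_pM2r.
have hW : forall x, 0 <= x -> x < rho -> nonneg (Wm T x).
  move=> x hx hxr; apply: extend => // y hy hyx; apply: hu => //.
  exact: le_lt_trans hyx hxr.
pose t k := \tr (mxpow T k).
have ht : forall k, 0 <= t k.
  move=> k; rewrite /t /mxtrace; apply: sumr_ge0 => i _; exact: nonneg_mxpow.
have hb : forall x, 0 <= x -> x < rho -> exists C, forall N, \sum_(k < N) x ^+ k * t k <= C.
  move=> x hx hxr; exists (\tr (Wm T x)) => N.
  by apply: tr_bound => //; [apply: hu | apply: hW].
have hZ : forall x, zetaG e x = expR (Lser t x) by [].
have Zmono : forall x y, 0 <= x -> x <= y -> y < rho -> zetaG e x <= zetaG e y.
  by move=> x y hx hxy hy; rewrite !hZ ler_expR; apply: (Lser_mono ht hb).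
have [K [K0 hK]] := Lser_lip ht hb a ha0 ha1.
set D := 1 + a * derive1 (fun x : R => zetaG e x) a.
have hD : 1 <= D.
  rewrite /D lerDl; apply: mulr_ge0; first exact: ltW.
  exact: (deriv_ge0 ha0 ha1 Zmono).
pose F p := Lser t (a * cl p).
have Flip : forall p q, p <= q -> 0 <= F q - F p /\ F q - F p <= (K * a) * (q - p).
  move=> p q hpq.
  have [c1 c2] := cl_mono hpq.
  have [p0 p1] := cl_bnd p. have [q0 q1] := cl_bnd q.
  have ap0 : 0 <= a * cl p by apply: mulr_ge0 => //; exact: ltW.
  have apq : a * cl p <= a * cl q by apply: ler_wpM2l => //; [exact: ltW | lra].
  have aq : a * cl q <= a by rewrite -[X in _ <= X]mulr1; apply: ler_wpM2l => //; exact: ltW.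
  split.
    rewrite subr_ge0; apply: (Lser_mono ht hb) => //; exact: le_lt_trans aq ha1.
  have := hK _ _ ap0 apq aq.
  have : K * (a * cl q - a * cl p) <= K * a * (q - p).
    rewrite -mulrA -mulrBr; apply: ler_wpM2l => //; apply: ler_wpM2l => //; exact: ltW.
  rewrite /F; lra.
have Fc : continuous F := @mono_lip_cont R F _ (mulr_ge0 K0 (ltW ha0)) Flip.
pose g p := p * ((zetaG e a + 1 - (expR (F p) + p)) / D).
have gc : continuous g.
  move=> p.
  rewrite /g; apply: cvgM; first exact: cvg_id.
  apply: cvgM; last exact: cvg_cst. apply: cvgD; first exact: cvg_cst.
  apply: cvgN; apply: cvgD; last exact: cvg_id.
  exact: (continuous_comp (Fc p) (@continuous_expR R _)).
have gs : forall p, 0 <= p -> p <= 1 -> s_fun e a p = g p.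
  by move=> p h0 h1; rewrite /s_fun /g /F cl_id.
have [c hc hmax] := EVT_max ler01 (continuous_subspaceT gc).
move: hc; rewrite in_itv /= => /andP[c0 c1].
have g0 : g 0 = 0 by rewrite /g mul0r.
have g1 : g 1 = 0.
  by rewrite /g /F cl_id // mulr1 -hZ subrr mul0r mul1r.
have gh : 0 < g (2^-1).
  rewrite /g /F cl_id; [|lra|lra].
  apply: mulr_gt0; first lra.
  apply: divr_gt0; last lra.
  have : zetaG e (a * 2^-1) <= zetaG e a.
    apply: Zmono; [|lra| exact: ha1].
    apply: mulr_ge0; lra.
  rewrite -hZ; lra.
have hgc : g (2^-1) <= g c by apply: hmax; rewrite in_itv /=; apply/andP; split; lra.
exists c; split.
  apply/andP; split.
    rewrite lt_def c0 andbT; apply/eqP => c0'.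
    by move: hgc; rewrite c0' g0; lra.
  rewrite lt_def c1 andbT; apply/eqP => c1'.
  by move: hgc; rewrite -c1' g1; lra.
move=> p /andP[p0 p1].
rewrite !gs //; apply: hmax; rewrite in_itv /=; apply/andP; split => //.
Qed.
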